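(* For all $n\ge 0$, $$S_n(x)=\frac{1}{2^n}\sum_{k=0}^n\binom{n}{k}\widehat{W}_k(2x)\,\widehat{W}_{n-k}(2x).$$
   Context: For a permutation $\pi$ of $[n]=\{1,\dots,n\}$, ${\rm des}(\pi)=\#\{i\in[n-1]:\pi(i)>\pi(i+1)\}$. A double descent is an index $i\in[n-2]$ with $\pi(i)>\pi(i+1)>\pi(i+2)$. The permutation $\pi$ is simsun if for every $k\in[n]$, the subword of $\pi$ consisting of the letters in $[k]$ (in order of appearance) has no double descents. Let $\mathcal{RS}_n$ be the set of simsun permutations of $[n]$ and $S_n(x)=\sum_{\pi\in\mathcal{RS}_n}x^{{\rm des}(\pi)}$, with $S_0(x)=1$. A left peak of $\pi\in\mathfrak S_n$ is an index $i\in[n-1]$ with $\pi(i-1)<\pi(i)>\pi(i+1)$, where $\pi(0)=0$; ${\rm lpk}(\pi)$ is the number of left peaks, and $\widehat W_n(x)=\sum_{\pi\in\mathfrak S_n}x^{{\rm lpk}(\pi)}$, with $\widehat W_0(x)=1$. *)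

(* Defs.v *)
From mathcomp Require Import all_boot all_order all_algebra all_fingroup.
Set Implicit Arguments. Unset Strict Implicit. Unset Printing Implicit Defensive.
Import GRing.Theory.
Local Open Scope ring_scope.

Definition perm_word n (s : 'S_n) : seq nat :=
  [seq (nat_of_ord (s i)).+1 | i <- enum 'I_n].

(* number of descents: #{ i in [1, size-1] : w_i > w_{i+1} } (0-indexed here) *)
Definition des_seq (w : seq nat) : nat :=
  count (fun i => nth 0 w i.+1 < nth 0 w i)%N (iota 0 (size w).-1).

Definition has_ddes (w : seq nat) : bool :=
  has (fun i => (nth 0 w i.+2 < nth 0 w i.+1) && (nth 0 w i.+1 < nth 0 w i))%N
      (iota 0 (size w - 2)).

Definition simsun (w : seq nat) : bool :=
  all (fun k => ~~ has_ddes (filter (fun a => a <= k)%N w)) (iota 1 (size w)).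

(* left peaks: indices i in [n-1] with pi(i-1) < pi(i) > pi(i+1), pi(0) = 0 *)
Definition lpk_seq (w : seq nat) : nat :=
  let w' := 0%N :: w in
  count (fun i => (nth 0 w' i.-1 < nth 0 w' i) && (nth 0 w' i.+1 < nth 0 w' i))%N
        (iota 1 (size w).-1).

Definition S_poly (n : nat) : {poly rat} :=
  \sum_(s : 'S_n | simsun (perm_word s)) 'X^(des_seq (perm_word s)).

Definition What_poly (n : nat) : {poly rat} :=
  \sum_(s : 'S_n) 'X^(lpk_seq (perm_word s)).

(* Main.v *)
Require Import Defs.
From mathcomp Require Import all_boot all_order all_algebra all_fingroup.
From mathcomp Require Import zify ring.
Import GRing.Theory.

Local Open Scope nat_scope.

Definition tp (w : seq nat) : bool := if w is x :: y :: _ then y < x else false.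
Fixpoint desr (w : seq nat) : nat := if w is x :: w' then tp w + desr w' else 0.
Definition pky (p : nat) (w : seq nat) : bool :=
  if w is x :: y :: _ then (p < x) && (y < x) else false.
Fixpoint pkr (p : nat) (w : seq nat) : nat :=
  if w is x :: w' then pky p w + pkr x w' else 0.
Definition t3 (x : nat) (w : seq nat) : bool :=
  if w is y :: z :: _ then (z < y) && (y < x) else false.
Fixpoint ddr (w : seq nat) : bool := if w is x :: w' then t3 x w' || ddr w' else false.

Fixpoint bd (u v : seq nat) : bool :=
  if u is x :: u' then (if u' is [::] then tp (x :: v) else bd u' v) else false.
Fixpoint pkx (p : nat) (u v : seq nat) : bool :=
  if u is x :: u' then (if u' is [::] then pky p (x :: v) else pkx x u' v) else false.

Lemma desr_cons x s : desr (x :: s) = tp (x :: s) + desr s. Proof. by []. Qed.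
Lemma pkr_cons p x s : pkr p (x :: s) = pky p (x :: s) + pkr x s. Proof. by []. Qed.

Lemma desr_cat u v : desr (u ++ v) = desr u + bd u v + desr v.
Proof.
elim: u => [|x [|y u'] IH] //.
have -> : (x :: y :: u') ++ v = x :: ((y :: u') ++ v) by [].
by rewrite desr_cons IH [desr (x :: _)]desr_cons !addnA.
Qed.

Lemma pkr_cat p u v : pkr p (u ++ v) = pkr p u + pkx p u v + pkr (last p u) v.
Proof.
elim: u p => [|x [|y u'] IH] p //.
have -> : (x :: y :: u') ++ v = x :: ((y :: u') ++ v) by [].
by rewrite pkr_cons IH [pkr p (x :: _)]pkr_cons !addnA.
Qed.

Lemma bd_big a u v : all (fun y => y < a) u -> bd u (a :: v) = false.
Proof.
elim: u => [|x [|y u'] IH] //=.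
  by rewrite andbT => xa; apply/negbTE; rewrite -leqNgt ltnW.
by move=> /andP[_ H]; apply: IH.
Qed.

Lemma pkx_big p a u v : all (fun y => y < a) u -> pkx p u (a :: v) = false.
Proof.
elim: u p => [|x [|y u'] IH] p //=.
  by move=> /andP[xa _]; apply/negbTE/negP => /andP[_ ax]; lia.
by move=> /andP[_ H]; apply: IH.
Qed.

Lemma ddr_cons x s : ddr (x :: s) = t3 x s || ddr s.
Proof. by []. Qed.

Lemma t3_cat x s t : t3 x s -> t3 x (s ++ t).
Proof. by case: s => [|y [|z s]]. Qed.

Lemma ddr_catl u v : ddr u -> ddr (u ++ v).
Proof.
elim: u => [|x u IH] //=; case/orP => [/(@t3_cat _ _ v) -> // | /IH ->]; by rewrite orbT.
Qed.

Lemma ddr_catr u v : ddr v -> ddr (u ++ v).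
Proof. by elim: u => [|x u IH] //= /IH ->; rewrite orbT. Qed.

Lemma bd_tp_ddr u v : bd u v -> tp v -> ddr (u ++ v).
Proof.
elim: u => [|x [|y u'] IH] //=.
  by case: v {IH} => [|a [|b v]] //= -> ->.
by move=> H1 H2; move: (IH H1 H2) => /= ->; rewrite !orbT.
Qed.

Lemma ddr_ins a u v : all (fun y => y < a) u -> ~~ ddr u ->
  ddr (u ++ a :: v) = ddr (a :: v).
Proof.
elim: u => [|x u IH] //= /andP[xa Hu] /norP[nt nd].
rewrite IH //.
case: u {IH} Hu nt nd => [|y [|z u]] //=.
- have ax : (a < x) = false by rewrite ltnNge (ltnW xa).
  by case: v => [|z v] //=; rewrite ax andbF.
- rewrite andbT => ya _ _.
  have ay : (a < y) = false by rewrite ltnNge (ltnW ya).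
  by rewrite ay.
- by move=> _ /negPf ->.
Qed.

Lemma ddr_big a v : all (fun y => y < a) v -> ~~ ddr v -> ddr (a :: v) = tp v.
Proof.
move=> Hv /negPf nd; rewrite /= nd orbF.
by case: v Hv {nd} => [|y [|z v]] //= /andP[-> _]; rewrite andbT.
Qed.

Lemma pkx_gt p u v : pkx p u v -> head 0 v < last p u.
Proof.
elim: u p => [|x [|y u'] IH] p //=.
  by case: v {IH} => [|b v] //= /andP[_ ->].
by move/(IH x).
Qed.

Lemma pkr_big q a v : q < a -> all (fun y => y < a) v ->
  pkr q (a :: v) + pky q v = (v != [::]) + pkr q v.
Proof.
move=> qa; case: v => [|y v] //= /andP[ya _].
rewrite qa ya /=.
have ay : (a < y) = false by rewrite ltnNge (ltnW ya).
case: v => [|z v]; first by rewrite !addn0.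
rewrite ay /=; lia.
Qed.

Local Open Scope nat_scope.

Lemma sum_tp w : \sum_(i < (size w).+1) tp (drop i w) = desr w.
Proof.
elim: w => [|x w IH]; first by rewrite big_ord_recl big_ord0.
by rewrite big_ord_recl /=; congr (_ + _); exact: IH.
Qed.

Lemma sum_nil w : \sum_(i < (size w).+1) (drop i w == [::] :> seq nat) = 1.
Proof.
elim: w => [|x w IH]; first by rewrite big_ord_recl big_ord0.
by rewrite big_ord_recl /=; exact: IH.
Qed.

Lemma sum_bd w : \sum_(i < (size w).+1) bd (take i w) (drop i w) = desr w.
Proof.
elim: w => [|x w IH]; first by rewrite big_ord_recl big_ord0.
case: w IH => [|y w] IH; first by rewrite !big_ord_recl big_ord0.
rewrite big_ord_recl /= big_ord_recl /=.
move: IH; rewrite big_ord_recl /= add0n => IH.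
rewrite add0n; congr (_ + _); exact: IH.
Qed.

Lemma sum_pky p w : \sum_(i < (size w).+1) pky (last p (take i w)) (drop i w) = pkr p w.
Proof.
elim: w p => [|x w IH] p; first by rewrite big_ord_recl big_ord0.
by rewrite big_ord_recl /=; congr (_ + _); exact: IH.
Qed.

Lemma sum_pkx p w : \sum_(i < (size w).+1) pkx p (take i w) (drop i w) = pkr p w.
Proof.
elim: w p => [|x w IH] p; first by rewrite big_ord_recl big_ord0.
case: w IH => [|y w] IH; first by rewrite !big_ord_recl big_ord0.
rewrite big_ord_recl /= big_ord_recl /=.
move: (IH x); rewrite big_ord_recl /= add0n => IH'.
rewrite add0n; congr (_ + _); exact: IH'.
Qed.

Local Open Scope nat_scope.

Definition ins (a i : nat) (w : seq nat) := take i w ++ a :: drop i w.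

Lemma all_takeP (P : pred nat) i w : all P w -> all P (take i w) && all P (drop i w).
Proof. by rewrite -all_cat cat_take_drop. Qed.

Lemma bd_nil u : bd u [::] = false.
Proof. by elim: u => [|x [|y u] IH]. Qed.

Lemma pkx_nil p u : pkx p u [::] = false.
Proof. by elim: u p => [|x [|y u] IH] p //=; apply: IH. Qed.

Lemma des_ins a i w : all (fun y => y < a) w ->
  desr (ins a i w) + bd (take i w) (drop i w) = desr w + (drop i w != [::]).
Proof.
move=> Hw; have /andP[Hu Hv] := all_takeP _ i _ Hw.
have -> : desr w = desr (take i w ++ drop i w) by rewrite cat_take_drop.
rewrite /ins !desr_cat bd_big //.
move: Hv; case: (drop i w) => [|y v] /=; first by rewrite !addn0 bd_nil.
by case/andP => -> _; rewrite /=; lia.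
Qed.

Lemma ddr_ins2 a i w : all (fun y => y < a) w -> ~~ ddr w ->
  ddr (ins a i w) = tp (drop i w).
Proof.
move=> Hw Hd; have /andP[Hu Hv] := all_takeP _ i _ Hw.
rewrite -(cat_take_drop i w) in Hd.
rewrite /ins ddr_ins //; last by apply: contra Hd; apply: ddr_catl.
by rewrite ddr_big //; apply: contra Hd; apply: ddr_catr.
Qed.

Lemma last_lt a u : 0 < a -> all (fun y => y < a) u -> last 0 u < a.
Proof.
move=> a0 Hu; have := mem_last 0 u; rewrite inE => /orP[/eqP -> //|].
by move/(allP Hu).
Qed.

Lemma lpk_ins a i w : 0 < a -> all (fun y => y < a) w ->
  pkr 0 (ins a i w) + pkx 0 (take i w) (drop i w) + pky (last 0 (take i w)) (drop i w)
  = pkr 0 w + (drop i w != [::]).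
Proof.
move=> a0 Hw; have /andP[Hu Hv] := all_takeP _ i _ Hw.
have -> : pkr 0 w = pkr 0 (take i w ++ drop i w) by rewrite cat_take_drop.
rewrite /ins !pkr_cat pkx_big // addn0.
have := pkr_big _ _ (drop i w) (last_lt _ _ a0 Hu) Hv; lia.
Qed.

Local Open Scope ring_scope.

Definition cAS (w : seq nat) (i : nat) : nat :=
  [&& drop i w != [::], ~~ bd (take i w) (drop i w) & ~~ tp (drop i w)].
Definition cS w := (\sum_(i < (size w).+1) cAS w i)%N.

Lemma ptS a w i : all (fun y => y < a)%N w -> ~~ ddr w ->
  (if ddr (ins a i w) then 0 else 'X^(desr (ins a i w)) : {poly rat}) =
  'X^(desr w) *+ addn (bd (take i w) (drop i w)) (drop i w == [::] :> seq nat)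
  + 'X^((desr w).+1) *+ cAS w i.
Proof.
move=> Hw Hd.
have E1 := des_ins a i w Hw.
rewrite (ddr_ins2 a i w Hw Hd) /cAS.
have excl : bd (take i w) (drop i w) -> tp (drop i w) -> False.
  move=> H1 H2; have := bd_tp_ddr _ _ H1 H2; rewrite cat_take_drop.
  by move=> H; move: Hd; rewrite H.
case Ht: (tp (drop i w)).
  have Hb : bd (take i w) (drop i w) = false.
    by apply/negbTE/negP => Hb; apply: excl.
  have Hn : (drop i w == [::]) = false.
    by move: Ht; case: (drop i w).
  by rewrite Hb Hn andbF /= !mulr0n addr0.
case Hn: (drop i w == [::]).
  move/eqP: Hn => Hn.
  have Hb : bd (take i w) (drop i w) = false by rewrite Hn bd_nil.
  have -> : desr (ins a i w) = desr w by move: E1; rewrite Hb Hn /=; lia.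
  by rewrite Hb /= mulr0n addr0.
case Hb: (bd (take i w) (drop i w)).
  have -> : desr (ins a i w) = desr w by move: E1; rewrite Hb Hn /=; lia.
  by rewrite /= mulr0n addr0.
have -> : desr (ins a i w) = (desr w).+1 by move: E1; rewrite Hb Hn /=; lia.
by rewrite /= mulr0n add0r.
Qed.

Lemma cntS w : ~~ ddr w -> (cS w + 2 * desr w = size w)%N.
Proof.
move=> Hd.
have H : (\sum_(i < (size w).+1) (cAS w i + bd (take i w) (drop i w)
   + (drop i w == [::] :> seq nat) + tp (drop i w)) = (size w).+1)%N.
  rewrite -[X in _ = X]card_ord -sum1_card; apply: eq_bigr => i _.
  rewrite /cAS.
  have excl : bd (take i w) (drop i w) -> tp (drop i w) -> False.
    move=> H1 H2; have := bd_tp_ddr _ _ H1 H2; rewrite cat_take_drop.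
    by move=> H; move: Hd; rewrite H.
  case Ht: (tp (drop i w)).
    have Hb : bd (take i w) (drop i w) = false.
      by apply/negbTE/negP => Hb; apply: excl.
    have Hn : (drop i w == [::]) = false.
      by move: Ht; case: (drop i w).
    by rewrite Hb Hn.
  case Hn: (drop i w == [::]).
    move/eqP: Hn => Hn.
    by rewrite Hn bd_nil.
  by case: (bd _ _).
move: H; rewrite !big_split /= sum_bd sum_nil sum_tp /cS.
set s := (\sum_(i < _) cAS w i)%N; lia.
Qed.

Lemma sumS_word a w : all (fun y => y < a)%N w -> ~~ ddr w ->
  \sum_(i < (size w).+1) (if ddr (ins a i w) then 0 else 'X^(desr (ins a i w)) : {poly rat})
  = 'X^(desr w) *+ (desr w).+1 + 'X^((desr w).+1) *+ cS w.
Proof.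
move=> Hw Hd.
under eq_bigr => i _ do rewrite (ptS a w i Hw Hd).
rewrite big_split /= !sumrMnr.
by rewrite big_split /= sum_bd sum_nil addn1.
Qed.

Definition cAW (w : seq nat) (i : nat) : nat :=
  [&& drop i w != [::], ~~ pkx 0 (take i w) (drop i w)
    & ~~ pky (last 0 (take i w)) (drop i w)].
Definition cW w := (\sum_(i < (size w).+1) cAW w i)%N.

Lemma pk_excl u v : pkx 0 u v -> pky (last 0 u) v -> False.
Proof.
move/pkx_gt; case: v => [|x [|y v]] //= H /andP[H2 _].
by move: (ltn_trans H H2); rewrite ltnn.
Qed.

Lemma ptW a w i : (0 < a)%N -> all (fun y => y < a)%N w ->
  ('X^(pkr 0 (ins a i w)) : {poly rat}) =
  'X^(pkr 0 w) *+ addn (addn (pkx 0 (take i w) (drop i w))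
        (pky (last 0 (take i w)) (drop i w))) (drop i w == [::] :> seq nat)
  + 'X^((pkr 0 w).+1) *+ cAW w i.
Proof.
move=> a0 Hw.
have E1 := lpk_ins a i w a0 Hw.
rewrite /cAW.
have excl := @pk_excl (take i w) (drop i w).
case Hn: (drop i w == [::]).
  move/eqP: Hn => Hn.
  rewrite Hn pkx_nil /=.
  have -> : pkr 0 (ins a i w) = pkr 0 w by move: E1; rewrite Hn pkx_nil /=; lia.
  by rewrite mulr0n addr0.
case Hx: (pkx 0 (take i w) (drop i w)).
  have Hy : pky (last 0 (take i w)) (drop i w) = false.
    by apply/negbTE/negP => Hy; apply: excl.
  have -> : pkr 0 (ins a i w) = pkr 0 w by move: E1; rewrite Hx Hy Hn /=; lia.
  by rewrite Hy /= mulr0n addr0.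
case Hy: (pky (last 0 (take i w)) (drop i w)).
  have -> : pkr 0 (ins a i w) = pkr 0 w by move: E1; rewrite Hx Hy Hn /=; lia.
  by rewrite /= mulr0n addr0.
have -> : pkr 0 (ins a i w) = (pkr 0 w).+1 by move: E1; rewrite Hx Hy Hn /=; lia.
by rewrite /= mulr0n add0r.
Qed.

Lemma cntW w : (cW w + 2 * pkr 0 w = size w)%N.
Proof.
have H : (\sum_(i < (size w).+1) (cAW w i + pkx 0 (take i w) (drop i w)
   + pky (last 0 (take i w)) (drop i w)
   + (drop i w == [::] :> seq nat)) = (size w).+1)%N.
  rewrite -[X in _ = X]card_ord -sum1_card; apply: eq_bigr => i _.
  rewrite /cAW.
  have excl := @pk_excl (take i w) (drop i w).
  case Hn: (drop i w == [::]).
    by move/eqP: Hn => ->; rewrite pkx_nil.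
  case Hx: (pkx 0 (take i w) (drop i w)).
    have Hy : pky (last 0 (take i w)) (drop i w) = false.
      by apply/negbTE/negP => Hy; apply: excl.
    by rewrite Hy.
  by case: (pky _ _).
move: H; rewrite !big_split /= sum_pkx sum_pky sum_nil /cW.
set s := (\sum_(i < _) cAW w i)%N; lia.
Qed.

Lemma sumW_word a w : (0 < a)%N -> all (fun y => y < a)%N w ->
  \sum_(i < (size w).+1) ('X^(pkr 0 (ins a i w)) : {poly rat})
  = 'X^(pkr 0 w) *+ (2 * pkr 0 w).+1 + 'X^((pkr 0 w).+1) *+ cW w.
Proof.
move=> a0 Hw.
under eq_bigr => i _ do rewrite (ptW a w i a0 Hw).
rewrite big_split /= !sumrMnr.
by rewrite !big_split /= sum_pkx sum_pky sum_nil addn1 mul2n addnn.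
Qed.

Local Open Scope ring_scope.

Lemma perm_word_perm n (s : 'S_n) : perm_eq (perm_word s) (iota 1 n).
Proof.
have -> : perm_word s = map (addn 1) (map val (map s (enum 'I_n))).
  by rewrite /perm_word -!map_comp; apply: eq_map => i /=; rewrite add1n.
rewrite -[iota 1 n]/(iota (1 + 0) n) iotaDl; apply: perm_map.
rewrite -val_enum_ord; apply: perm_map.
apply: uniq_perm; first by rewrite (map_inj_uniq (@perm_inj _ s)) enum_uniq.
  exact: enum_uniq.
move=> x; rewrite mem_enum; apply/mapP; exists (s^-1 x)%g; first by rewrite mem_enum.
by rewrite permKV.
Qed.

Lemma perm_word_inj n : injective (@perm_word n).
Proof.
move=> s t /eq_in_map H; apply/permP => i.
have := H i; rewrite mem_enum => /(_ isT) [] /val_inj.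
done.
Qed.

Lemma sum_perm_word n (F : seq nat -> {poly rat}) :
  \sum_(s : 'S_n) F (perm_word s) = \sum_(w <- permutations (iota 1 n)) F w.
Proof.
rewrite -big_enum -(big_map (@perm_word n) xpredT).
apply: perm_big.
have U1 : uniq (map (@perm_word n) (enum 'S_n)).
  by rewrite (map_inj_uniq (@perm_word_inj n)) enum_uniq.
have SUB : {subset map (@perm_word n) (enum 'S_n) <= permutations (iota 1 n)}.
  by move=> w /mapP[s _ ->]; rewrite mem_permutations perm_word_perm.
have SZ : (size (permutations (iota 1 n)) <= size (map (@perm_word n) (enum 'S_n)))%N.
  by rewrite size_permutations ?iota_uniq // size_iota size_map -cardE card_Sn.
have [_ E] := @uniq_min_size _ _ (permutations (iota 1 n)) U1 SUB SZ.
exact: uniq_perm U1 (permutations_uniq _) E.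
Qed.

Lemma perm_iota_props n w : w \in permutations (iota 1 n) ->
  size w = n /\ all (fun y => y < n.+1)%N w.
Proof.
rewrite mem_permutations => H; split; first by rewrite (perm_size H) size_iota.
rewrite (perm_all _ H); apply/allP => y; rewrite mem_iota; lia.
Qed.

Lemma ins_index a i w : a \notin w -> (i <= size w)%N -> index a (ins a i w) = i.
Proof.
move=> Ha Hi; rewrite /ins index_cat.
have -> : (a \in take i w) = false by apply/negbTE; apply: contra Ha; apply: mem_take.
by rewrite size_takel //= eqxx addn0.
Qed.

Lemma rem_ins_aux (a : nat) (u v : seq nat) : a \notin u -> rem a (u ++ a :: v) = u ++ v.
Proof.
elim: u => [|x u IH] /=; first by rewrite eqxx.
rewrite inE negb_or => /andP[Hx Hu]; rewrite eq_sym (negbTE Hx) IH //.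
Qed.

Lemma ins_rem a i w : a \notin w -> rem a (ins a i w) = w.
Proof.
move=> Ha; rewrite /ins rem_ins_aux ?cat_take_drop //.
by apply: contra Ha; apply: mem_take.
Qed.

Lemma all_notin n w : all (fun y => y < n.+1)%N w -> n.+1 \notin w.
Proof. by move=> H; apply/negP => /(allP H); rewrite ltnn. Qed.

Lemma perm_ins n : perm_eq (permutations (iota 1 n.+1))
  [seq ins n.+1 i w | w <- permutations (iota 1 n), i <- iota 0 n.+1].
Proof.
set L := [seq _ | w <- _, i <- _].
have UL : uniq L.
  apply: allpairs_uniq; [exact: permutations_uniq | exact: iota_uniq |].
  move=> [w i] [v j] H1 H2 /= E.
  case/allpairsP: H1 => [[w1 i1] [/= Hw Hi [Ew1 Ei1]]].
  case/allpairsP: H2 => [[v1 j1] [/= Hv Hj [Ev1 Ej1]]].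
  subst w i v j.
  have [Sw Aw] := perm_iota_props _ _ Hw; have [Sv Av] := perm_iota_props _ _ Hv.
  have Hi' : (i1 <= n)%N by move: Hi; rewrite inE mem_iota => /orP[/eqP -> //|]; lia.
  have Hj' : (j1 <= n)%N by move: Hj; rewrite inE mem_iota => /orP[/eqP -> //|]; lia.
  have Eij : i1 = j1.
    rewrite -(ins_index _ i1 _ (all_notin _ _ Aw)) ?Sw // E ins_index ?Sv //.
    exact: all_notin.
  have Ewv : w1 = v1.
    rewrite -(ins_rem _ i1 _ (all_notin _ _ Aw)) E ins_rem //; exact: all_notin.
  by rewrite Eij Ewv.
have SUB : {subset L <= permutations (iota 1 n.+1)}.
  move=> z /allpairsP[[w i] /= [Hw Hi ->]].
  rewrite mem_permutations.
  move: Hw; rewrite mem_permutations => Hw.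
  rewrite /ins -cat1s perm_catCA cat1s.
  rewrite cat_take_drop.
  have -> : (1%N :: iota 2 n) = iota 1 n ++ [:: n.+1].
    by have H := iotaD 1 n 1; rewrite addn1 add1n in H; exact: H.
  by rewrite perm_sym perm_catC /= perm_cons perm_sym.
have SZ : (size (permutations (iota 1 n.+1)) <= size L)%N.
  by rewrite size_allpairs !size_permutations ?iota_uniq // !size_iota factS mulnC.
have [_ E] := @uniq_min_size _ _ _ UL SUB SZ.
apply: uniq_perm; [exact: permutations_uniq | exact: UL |].
by move=> z; rewrite E.
Qed.

Lemma sum_ins n (F : seq nat -> {poly rat}) :
  \sum_(w <- permutations (iota 1 n.+1)) F w =
  \sum_(w <- permutations (iota 1 n)) \sum_(i < n.+1) F (ins n.+1 i w).
Proof.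
rewrite (perm_big _ (perm_ins n)) big_allpairs_dep /=.
apply: eq_bigr => w _.
by rewrite -(big_mkord xpredT (fun i => F (ins n.+1 i w))) /index_iota subn0.
Qed.

Local Open Scope ring_scope.

Lemma des_seq_cons x s : des_seq (x :: s) = (tp (x :: s) + des_seq s)%N.
Proof.
case: s => [|y w] //.
rewrite /des_seq /=.
rewrite -[iota 1 _]/(iota (1 + 0) _) iotaDl count_map.
by congr (_ + _)%N; apply: eq_count => i.
Qed.

Lemma des_seqE w : des_seq w = desr w.
Proof. by elim: w => [|x w IH] //; rewrite des_seq_cons IH. Qed.

Lemma has_ddes_cons x s : has_ddes (x :: s) = t3 x s || has_ddes s.
Proof.
case: s => [|y [|z w]] //.
rewrite /has_ddes /=.
rewrite !subSS !subn0.
rewrite /= -[iota 1 _]/(iota (1 + 0) _) iotaDl has_map.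
by congr (_ || _).
Qed.

Lemma has_ddesE w : has_ddes w = ddr w.
Proof. by elim: w => [|x w IH] //; rewrite has_ddes_cons IH. Qed.

Definition lpk' (p : nat) (w : seq nat) : nat :=
  let w' := p :: w in
  count (fun i => (nth 0 w' i.-1 < nth 0 w' i) && (nth 0 w' i.+1 < nth 0 w' i))%N
        (iota 1 (size w).-1).

Lemma lpk'_cons p x s : lpk' p (x :: s) = (pky p (x :: s) + lpk' x s)%N.
Proof.
case: s => [|y w] //.
rewrite /lpk' /=.
rewrite -[iota 2 _]/(iota (1 + 1) _) iotaDl count_map.
congr (_ + _)%N; apply: eq_in_count => i; rewrite mem_iota => /andP[i1 _].
by case: i i1.
Qed.

Lemma lpkE w : lpk_seq w = pkr 0 w.
Proof.
rewrite -[lpk_seq w]/(lpk' 0 w); elim: w 0%N => [|x w IH] p //.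
by rewrite lpk'_cons IH.
Qed.

Local Open Scope ring_scope.

Lemma auxS' (x y D C: {poly rat}) :
  (1 + D) * y + C * (x*y) = (1 + (C + 2 * D) * x) * y + (1 - 2 * x) * (D * y).
Proof. ring. Qed.
Lemma auxW' (x y D C: {poly rat}) :
  (1 + 2 * D) * y + C * (x*y) = (1 + (C + 2 * D) * x) * y + 2 * (1 - x) * (D * y).
Proof. ring. Qed.
Lemma auxS (x y : {poly rat}) (d c : nat) :
  y *+ d.+1 + (x * y) *+ c = (1 + (c + 2 * d)%N%:R * x) * y + (1 - 2%:R * x) * (y *+ d).
Proof.
rewrite -[y *+ d.+1]mulr_natl -[(x*y) *+ c]mulr_natl -[y *+ d]mulr_natl natrD natrM.
rewrite -[(d.+1)%:R]/((1 + d)%N%:R) natrD.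
exact: auxS'.
Qed.
Lemma auxW (x y : {poly rat}) (d c : nat) :
  y *+ (2 * d).+1 + (x * y) *+ c = (1 + (c + 2 * d)%N%:R * x) * y + 2%:R * (1 - x) * (y *+ d).
Proof.
rewrite -[y *+ (2 * d).+1]mulr_natl -[(x*y) *+ c]mulr_natl -[y *+ d]mulr_natl natrD natrM.
rewrite -[((2 * d).+1)%:R]/((1 + 2 * d)%N%:R) natrD natrM.
exact: auxW'.
Qed.

Definition opS (n : nat) (p : {poly rat}) :=
  (1 + n%:R * 'X) * p + 'X * (1 - 2%:R * 'X) * p^`().
Definition opW (n : nat) (p : {poly rat}) :=
  (1 + n%:R * 'X) * p + 2%:R * 'X * (1 - 'X) * p^`().

Lemma X_derivXn d : 'X * ('X^d)^`() = 'X^d *+ d :> {poly rat}.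
Proof. by rewrite derivXn; case: d => [|d]; rewrite ?mulr0n ?mulr0 // mulrnAr -exprS. Qed.

Lemma opS_X n d c : n = (c + 2 * d)%N ->
  opS n 'X^d = 'X^d *+ d.+1 + 'X^(d.+1) *+ c.
Proof.
move=> ->; rewrite /opS exprS auxS; congr (_ + _).
by rewrite -X_derivXn mulrCA -mulrA.
Qed.

Lemma opW_X n d c : n = (c + 2 * d)%N ->
  opW n 'X^d = 'X^d *+ (2 * d).+1 + 'X^(d.+1) *+ c.
Proof.
move=> ->; rewrite /opW exprS auxW; congr (_ + _).
by rewrite -X_derivXn -!mulrA; congr (_ * _); rewrite mulrCA.
Qed.

Lemma opS_sum n (I : Type) (r : seq I) (F : I -> {poly rat}) :
  opS n (\sum_(i <- r) F i) = \sum_(i <- r) opS n (F i).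
Proof. by rewrite /opS raddf_sum !mulr_sumr -big_split. Qed.

Lemma opW_sum n (I : Type) (r : seq I) (F : I -> {poly rat}) :
  opW n (\sum_(i <- r) F i) = \sum_(i <- r) opW n (F i).
Proof. by rewrite /opW raddf_sum !mulr_sumr -big_split. Qed.

Lemma opS0 n : opS n 0 = 0.
Proof. by rewrite /opS deriv0 !mulr0 addr0. Qed.

Definition Sl n := \sum_(w <- permutations (iota 1 n)) (if simsun w then 'X^(desr w) else 0 : {poly rat}).
Definition Wl n := \sum_(w <- permutations (iota 1 n)) ('X^(pkr 0 w) : {poly rat}).

Lemma S_polyE n : S_poly n = Sl n.
Proof.
rewrite /S_poly big_mkcond /=.
rewrite (sum_perm_word n (fun w => if simsun w then 'X^(des_seq w) else 0)).
by apply: eq_bigr => w _; rewrite des_seqE.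
Qed.

Lemma What_polyE n : What_poly n = Wl n.
Proof.
rewrite /What_poly (sum_perm_word n (fun w => 'X^(lpk_seq w))).
by apply: eq_bigr => w _; rewrite lpkE.
Qed.

Lemma perm_ins_cons a i w : perm_eq (ins a i w) (a :: w).
Proof. by rewrite /ins -cat1s perm_catCA cat1s cat_take_drop. Qed.

Lemma iotaS1 n : iota 1 n.+1 = iota 1 n ++ [:: n.+1].
Proof. by have H := iotaD 1 n 1; rewrite addn1 add1n in H; exact: H. Qed.

Lemma simsun_ins n w i : w \in permutations (iota 1 n) ->
  simsun (ins n.+1 i w) = simsun w && ~~ ddr (ins n.+1 i w).
Proof.
move=> Hw; have [Sw Aw] := perm_iota_props _ _ Hw.
have P := perm_ins_cons n.+1 i w.
have Sins : size (ins n.+1 i w) = n.+1 by rewrite (perm_size P) /= Sw.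
rewrite /simsun Sins Sw iotaS1 all_cat /= andbT.
congr (_ && _).
  apply: eq_in_all => k; rewrite mem_iota => /andP[_ Hk].
  rewrite /ins filter_cat /=.
  have -> : (n.+1 <= k)%N = false by apply/negbTE; rewrite -ltnNge; lia.
  by rewrite -filter_cat cat_take_drop.
have -> : [seq a <- ins n.+1 i w | (a <= n.+1)%N] = ins n.+1 i w.
  apply/all_filterP; rewrite (perm_all _ P) /= leqnn /=.
  by apply: sub_all Aw => y /ltnW.
by rewrite has_ddesE.
Qed.

Lemma simsun_nodd n w : w \in permutations (iota 1 n) -> simsun w -> ~~ ddr w.
Proof.
move=> Hw; have [Sw Aw] := perm_iota_props _ _ Hw.
case: n Sw Aw Hw => [|n] Sw Aw Hw.
  by case: w Sw {Aw Hw}.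
rewrite /simsun Sw => /allP /(_ n.+1).
rewrite mem_iota leqnn /= => /(_ isT).
have -> : [seq a <- w | (a <= n.+1)%N] = w.
  by apply/all_filterP; apply: sub_all Aw => y; rewrite ltnS.
by rewrite has_ddesE.
Qed.

Lemma Srec n : Sl n.+1 = opS n (Sl n).
Proof.
rewrite /Sl sum_ins opS_sum; apply: eq_big_seq => w Hw.
have [Sw Aw] := perm_iota_props _ _ Hw.
under eq_bigr => i _ do rewrite (simsun_ins n w i Hw).
case Hs: (simsun w); last by rewrite opS0 big1.
have Hd := simsun_nodd n w Hw Hs.
under eq_bigr => i _ do rewrite /= if_neg.
move: (sumS_word n.+1 w Aw Hd); rewrite Sw => ->.
by rewrite (@opS_X n (desr w) (cS w)) //; rewrite cntS // Sw.
Qed.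

Lemma Wrec n : Wl n.+1 = opW n (Wl n).
Proof.
rewrite /Wl sum_ins opW_sum; apply: eq_big_seq => w Hw.
have [Sw Aw] := perm_iota_props _ _ Hw.
move: (sumW_word n.+1 w (ltn0Sn n) Aw); rewrite Sw => ->.
by rewrite (@opW_X n (pkr 0 w) (cW w)) //; rewrite cntW Sw.
Qed.

Local Open Scope ring_scope.

Definition q2 : {poly rat} := 2%:R *: 'X.
Definition A (m : nat) : {poly rat} := What_poly m \Po q2.

Lemma q2E : q2 = 2%:R * 'X.
Proof. by rewrite /q2 scaler_nat mulr_natl. Qed.

Lemma dq2 : q2^`() = 2%:R.
Proof. by rewrite /q2 derivZ derivX scaler_nat. Qed.

Lemma auxA (X a b M : {poly rat}) :
  (1 + M * (2 * X)) * a + 2 * (2 * X) * (1 - 2 * X) * b =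
  (1 + (M * 2) * X) * a + 2 * (X * (1 - 2 * X) * (b * 2)).
Proof. ring. Qed.

Lemma Arec m : A m.+1 = (1 + (m%:R * 2%:R) * 'X) * A m + 2%:R * ('X * (1 - 2%:R * 'X) * (A m)^`()).
Proof.
rewrite /A !What_polyE Wrec /opW deriv_comp dq2.
rewrite !rmorphD !rmorphM /= !rmorphB /= rmorph1 !rmorph_nat comp_polyX.
rewrite comp_polyD comp_polyM comp_polyX -polyC1 -polyC_natr !comp_polyC polyC1 polyC_natr q2E.
exact: auxA.
Qed.

Lemma opSZ n (c : rat) p : opS n (c *: p) = c *: opS n p.
Proof. by rewrite /opS derivZ -!scalerAr scalerDr. Qed.

Lemma pascal (F : nat -> nat -> {poly rat}) n :
  \sum_(k < n.+2) 'C(n.+1, k)%:R *: F k (n.+1 - k)%N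
  = \sum_(k < n.+1) 'C(n, k)%:R *: (F k.+1 (n - k)%N + F k (n - k).+1).
Proof.
rewrite big_ord_recl.
under eq_bigr => k _ do rewrite lift0 binS natrD scalerDl subSS.
rewrite big_split /=.
under [X in _ = X]eq_bigr => k _ do rewrite scalerDr.
rewrite big_split /= addrA [in RHS]addrC; congr (_ + _).
transitivity (\sum_(i < n.+2) 'C(n,i)%:R *: F i (n.+1 - i)%N).
  rewrite [in RHS]big_ord_recl !bin0; congr (_ + _).
rewrite big_ord_recr /= bin_small // scale0r addr0.
by apply: eq_bigr => i _; rewrite subSn // -ltnS.
Qed.

Definition T (n : nat) := \sum_(k < n.+1) 'C(n, k)%:R *: (A k * A (n - k)%N).

Lemma auxT (X a b a' b' K L : {poly rat}) :
  ((1 + K * 2 * X) * a + 2 * (X * (1 - 2 * X) * a')) * b +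
  a * ((1 + L * 2 * X) * b + 2 * (X * (1 - 2 * X) * b')) =
  ((1 + (K + L) * X) * (a * b) + X * (1 - 2 * X) * (a' * b + a * b')) +
  ((1 + (K + L) * X) * (a * b) + X * (1 - 2 * X) * (a' * b + a * b')).
Proof. ring. Qed.

Lemma ptT n k : (k <= n)%N ->
  A k.+1 * A (n - k)%N + A k * A (n - k).+1 = 2%:R *: opS n (A k * A (n - k)%N).
Proof.
move=> kn; rewrite !Arec /opS derivM.
have -> : n%:R = k%:R + (n - k)%N%:R :> {poly rat} by rewrite -natrD subnKC.
rewrite scaler_nat mulr2n.
exact: auxT.
Qed.

Lemma Trec n : T n.+1 = 2%:R *: opS n (T n).
Proof.
rewrite /T.
have := pascal (fun i j => A i * A j) n; rewrite /= => ->.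
have hk : forall k : 'I_n.+1, (k <= n)%N by move=> k; rewrite -ltnS.
under eq_bigr => k _ do rewrite (ptT n k (hk k)) scalerA mulrC -scalerA -opSZ.
by rewrite -scaler_sumr -opS_sum.
Qed.

Theorem mainTheorem2 (n : nat) :
  S_poly n =
  ((2 ^+ n)^-1 : rat) *:
    \sum_(k < n.+1)
      ('C(n, k))%:R *:
        ((What_poly k \Po (2%:R *: 'X)) * (What_poly (n - k) \Po (2%:R *: 'X))).
Proof.
rewrite -[\sum_(k < n.+1) _]/(T n).
elim: n => [|n IH].
  rewrite S_polyE /Sl /T /= big_seq1 big_ord_recl big_ord0 /A What_polyE /Wl /= big_seq1.
  by rewrite expr0 invr1 !scale1r addr0 rmorph1 mulr1.
rewrite S_polyE Srec -S_polyE IH opSZ Trec scalerA; congr (_ *: _).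
by rewrite exprS invfM mulrAC mulVf ?mul1r.
Qed.
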